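(* Let $x\in\mathscr{S}\cdot\mathcal{Y}$ with coefficient matrix $\mathbf{X}$ and let $\varrho=x-\mathcal{P}x$, where $\mathcal{P}$ is one of the two projections $\mathcal{P}_{\hat{\mathcal{Y}}\to\hat{\mathscr{S}}}$, $\mathcal{P}_{\hat{\mathscr{S}}\to\hat{\mathcal{Y}}}$ defined in the context (with reduced dimensions $1\le\hat q\le q$ and $2\le\hat s\le s$). Then $$\|\varrho\|_{\mathcal{S}\cdot\mathcal{Y}}\le\begin{cases}\Sigma_{\hat{\mathcal{Y}}\to\hat{\mathcal{S}}}&\text{if }\mathcal{P}=\mathcal{P}_{\hat{\mathcal{Y}}\to\hat{\mathscr{S}}},\\ \Sigma_{\hat{\mathcal{S}}\to\hat{\mathcal{Y}}}&\text{if }\mathcal{P}=\mathcal{P}_{\hat{\mathscr{S}}\to\hat{\mathcal{Y}}},\end{cases}$$ where $$\Sigma_{\hat{\mathcal{Y}}\to\hat{\mathcal{S}}}=\Big(\sum_{i=\hat q+1}^q\sigma_i^2\Big)^{1/2}+\Big(\sum_{j=\hat s}^s\mathring\sigma_j^2\Big)^{1/2},\qquad \Sigma_{\hat{\mathcal{S}}\to\hat{\mathcal{Y}}}=\Big(\sum_{j=\hat s}^s\underline{\mathring\sigma}_j^2\Big)^{1/2}+\Big(\sum_{i=\hat q+1}^q\underline\sigma_i^2\Big)^{1/2},$$ with $\sigma_i$ the singular values of $\mathbf{L}_{\mathcal{Y}}^T\mathbf{X}\mathbf{L}_{\mathcal{S}}$, $\mathring\sigma_j$ those of $\mathbf{L}_{\mathcal{Y}}^T\mathring{\mathbf{X}}_{\mathscr{S}\cdot\hat{\mathcal{Y}}}\mathbf{L}_{\mathcal{S}}$,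 $\underline{\mathring\sigma}_j$ those of $\mathbf{L}_{\mathcal{Y}}^T\mathring{\mathbf{X}}\mathbf{L}_{\mathcal{S}}$, and $\underline\sigma_i$ those of $\mathbf{L}_{\mathcal{Y}}^T\mathbf{X}_{\hat{\mathscr{S}}\cdot\mathcal{Y}}\mathbf{L}_{\mathcal{S}}$.
   Context: Setting: $T>0$, $\Omega\subset\mathbb{R}^d$ bounded domain, $\mathcal{S}=\mathrm{span}\{\psi_1,\ldots,\psi_s\}\subset L^2(0,T)$ a nodal basis with $\psi_1$ the nodal function at $t=0$ ($\psi_1(0)=1$, $\psi_j(0)=0$ for $j\ge2$), $\mathcal{Y}=\mathrm{span}\{\nu_1,\ldots,\nu_q\}\subset L^2(\Omega)$. $\mathcal{S}\cdot\mathcal{Y}$ is the span of $\psi_j\nu_i$; $x=\sum_{i,j}\mathbf{x}_{i,j}\nu_i\psi_j$ has coefficient matrix $[\mathbf{x}_{i,j}]\in\mathbb{R}^{q\times s}$; all coefficient matrices below are taken with respect to this full basis. Inner product $(x_1,x_2)_{\mathcal{S}\cdot\mathcal{Y}}=\int_0^T\int_\Omega x_1x_2$ and induced norm; for a subspace $\mathcal{Z}\subseteq\mathcal{S}\cdot\mathcal{Y}$, $\Pi_{\mathcal{Z}}$ is the orthogonal projection onto $\mathcal{Z}$ in this inner product. Gramians $\mathbf{M}_{\mathcal{S}}=[(\psi_i,\psi_j)_{L^2(0,T)}]=\mathbf{L}_{\mathcal{S}}\mathbf{L}_{\mathcal{S}}^T$ with $\mathbf{L}_{\mathcal{S}}$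 invertible upper triangular, $\mathbf{M}_{\mathcal{Y}}=[(\nu_i,\nu_j)_{L^2(\Omega)}]=\mathbf{L}_{\mathcal{Y}}\mathbf{L}_{\mathcal{Y}}^T$. $\Pi_{\mathcal{Y}}$ is the $L^2(\Omega)$-projection onto $\mathcal{Y}$, $x_0$ a given initial value, and $\mathscr{S}\cdot\mathcal{Y}=\{x\in\mathcal{S}\cdot\mathcal{Y}:x(0)=\Pi_{\mathcal{Y}}x_0\}$. For a matrix $\mathbf{Z}$, $\mathring{\mathbf{Z}}$ denotes $\mathbf{Z}$ with first column set to zero. Reduced space basis from $\mathbf{Z}\in\mathbb{R}^{q\times s}$: $V_{\hat q}$ = matrix of the $\hat q$ leading left singular vectors of $\mathbf{L}_{\mathcal{Y}}^T\mathbf{Z}\mathbf{L}_{\mathcal{S}}$, $[\hat\nu_1,\ldots,\hat\nu_{\hat q}]^T=V_{\hat q}^T\mathbf{L}_{\mathcal{Y}}^{-1}[\nu_1,\ldots,\nu_q]^T$, $\hat{\mathcal{Y}}=\mathrm{span}\{\hat\nu_i\}$. Reduced time basis (incorporating the initial condition) from $\mathbf{Z}$: $\mathring U_{\hat s-1}$ = the $\hat s-1$ leading right singular vectors of $\mathbf{L}_{\mathcal{Y}}^T\mathring{\mathbf{Z}}\mathbf{L}_{\mathcal{S}}$, $U_{\hat s}=[(\mathbf{L}_{\mathcal{S}}^T)_{:,1}\;\mathring U_{\hat s-1}]$ (first column of $\mathbf{L}_{\mathcal{S}}^T$ prepended), $[\hat\psi_1,\ldots,\hat\psi_{\hat s}]^T=U_{\hat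 s}^T\mathbf{L}_{\mathcal{S}}^{-1}[\psi_1,\ldots,\psi_s]^T$, $\hat{\mathcal{S}}=\mathrm{span}\{\hat\psi_j\}$; the symbol $\hat{\mathscr{S}}$ indicates this construction and that functions satisfy the initial condition $\cdot(0)=\Pi_{\mathcal{Y}}x_0$. Products $\mathcal{S}\cdot\hat{\mathcal{Y}}$, $\hat{\mathcal{S}}\cdot\mathcal{Y}$, $\hat{\mathcal{S}}\cdot\hat{\mathcal{Y}}$ are spans of the corresponding products of basis functions. Projection $\mathcal{P}_{\hat{\mathcal{Y}}\to\hat{\mathscr{S}}}$: build $\hat{\mathcal{Y}}$ from $\mathbf{X}$; let $\mathbf{X}_{\mathscr{S}\cdot\hat{\mathcal{Y}}}$ be the coefficient matrix of $\Pi_{\mathcal{S}\cdot\hat{\mathcal{Y}}}x$; build $\hat{\mathcal{S}}$ from $\mathbf{X}_{\mathscr{S}\cdot\hat{\mathcal{Y}}}$; set $\mathcal{P}_{\hat{\mathcal{Y}}\to\hat{\mathscr{S}}}x=\Pi_{\hat{\mathcal{S}}\cdot\hat{\mathcal{Y}}}\Pi_{\mathcal{S}\cdot\hat{\mathcal{Y}}}x$. Projection $\mathcal{P}_{\hat{\mathscr{S}}\to\hat{\mathcal{Y}}}$: build $\hat{\mathcal{S}}$ from $\mathbf{X}$; let $\mathbf{X}_{\hat{\mathscr{S}}\cdot\mathcal{Y}}$ be the coefficient matrix of $\Pi_{\hat{\mathcal{S}}\cdot\mathcal{Y}}x$; build $\hat{\mathcal{Y}}$ from $\mathbf{X}_{\hat{\mathscr{S}}\cdot\mathcal{Y}}$;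 set $\mathcal{P}_{\hat{\mathscr{S}}\to\hat{\mathcal{Y}}}x=\Pi_{\hat{\mathcal{S}}\cdot\hat{\mathcal{Y}}}\Pi_{\hat{\mathcal{S}}\cdot\mathcal{Y}}x$. Singular values are ordered nonincreasingly and taken to be $0$ for indices exceeding $\min(q,s)$. *)

(* Defs.v *)
(* Space-time functions x in S.Y are represented by their
   coefficient matrices X : 'M[R]_(q,s) w.r.t. the basis nu_i psi_j
   (X i j = coefficient of nu_i psi_j, 0-based indices; psi_1 of the paper is
   column 0).  The L^2 Gramians are M_Y = L_Y L_Y^T and M_S = L_S L_S^T. *)
From mathcomp Require Import all_boot all_order all_algebra.
From mathcomp Require Import reals.
Set Implicit Arguments. Unset Strict Implicit. Unset Printing Implicit Defensive.
Import Order.TTheory GRing.Theory Num.Theory.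
Local Open Scope ring_scope.

Section Defs.
Variable R : realType.

(* (x1,x2)_{S.Y} = int_0^T int_Omega x1 x2
                 = sum X1_ij X2_kl (nu_i,nu_k)(psi_j,psi_l)
                 = tr(X1^T M_Y X2 M_S). *)
Definition sy_inner q s (LY : 'M[R]_q) (LS : 'M[R]_s) (X1 X2 : 'M[R]_(q, s)) : R :=
  \tr (X1^T *m (LY *m LY^T) *m X2 *m (LS *m LS^T)).

Definition sy_norm q s (LY : 'M[R]_q) (LS : 'M[R]_s) (X : 'M[R]_(q, s)) : R :=
  Num.sqrt (sy_inner LY LS X X).

Definition is_orth_proj q s (LY : 'M[R]_q) (LS : 'M[R]_s)
  (Z : 'M[R]_(q, s) -> Prop) (X P : 'M[R]_(q, s)) : Prop :=
  Z P /\ forall Y, Z Y -> sy_inner LY LS (X - P) Y = 0.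

Definition zero_first q s (Z : 'M[R]_(q, s)) : 'M[R]_(q, s) :=
  \matrix_(i, j) if (nat_of_ord j == 0)%N then 0 else Z i j.

Definition rect_diag q s (sv : nat -> R) : 'M[R]_(q, s) :=
  \matrix_(i, j) if (nat_of_ord i == nat_of_ord j) then sv (nat_of_ord i) else 0.

Definition is_svd q s (A : 'M[R]_(q, s)) (U : 'M[R]_q) (sv : nat -> R)
  (V : 'M[R]_s) : Prop :=
  [/\ U^T *m U = 1%:M /\ V^T *m V = 1%:M,
      (forall k, 0 <= sv k),
      (forall k l, (k <= l)%N -> sv l <= sv k),
      (forall k, (minn q s <= k)%N -> sv k = 0)
    & A = U *m rect_diag q s sv *m V^T].

Definition ordpred n (j : 'I_n) : 'I_n :=
  Ordinal (leq_ltn_trans (leq_pred j) (ltn_ord j)).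

(* s x s matrix whose column 0 is the first column of L_S^T and whose
   column j >= 1 is the j-th right singular vector V_{:,j-1};
   its first sh columns are U_sh = [(L_S^T)_{:,1}  \ring U_{sh-1}]. *)
Definition time_basis s (LS V : 'M[R]_s) : 'M[R]_s :=
  \matrix_(i, j) if (nat_of_ord j == 0)%N then LS^T i j else V i (ordpred j).

(* coefficient vectors (as columns) of the reduced space basis
   [nu^_1..] = W^T L_Y^{-1} [nu_1..], i.e. columns of L_Y^{-T} W *)
Definition space_coef q (LY W : 'M[R]_q) : 'M[R]_q := (invmx LY)^T *m W.
(* coefficient vectors of [psi^_1..] = U^T L_S^{-1} [psi_1..] *)
Definition time_coef s (LS U : 'M[R]_s) : 'M[R]_s := (invmx LS)^T *m U.

(* span of the products a_k b_l (k < qh, l < sh), where the columns of A (resp.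
   B) are coefficient vectors of the space (resp. time) functions. *)
Definition span_prod q s (A : 'M[R]_q) (B : 'M[R]_s) (qh sh : nat)
  (X : 'M[R]_(q, s)) : Prop :=
  exists C : 'M[R]_(q, s),
    (forall i j, (qh <= nat_of_ord i)%N || (sh <= nat_of_ord j)%N -> C i j = 0)
    /\ X = A *m C *m B^T.

(* sum_{k = a}^{n-1} sv_k^2  (0-based) *)
Definition tail_sq (sv : nat -> R) (a n : nat) : R :=
  \sum_(a <= k < n) sv k ^+ 2.

End Defs.

(* Main.v *)
Require Import Defs.
From mathcomp Require Import all_boot all_order all_algebra.
From mathcomp Require Import reals.
Import Order.TTheory GRing.Theory Num.Theory.
Local Open Scope ring_scope.

Definition fi {R : realType} {m n} (A B : 'M[R]_(m, n)) : R := \tr (A^T *m B).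

Lemma sy_innerE (R : realType) q s (LY : 'M[R]_q) (LS : 'M[R]_s) X1 X2 :
  sy_inner LY LS X1 X2 = fi (LY^T *m X1 *m LS) (LY^T *m X2 *m LS).
Proof.
rewrite /sy_inner /fi !trmx_mul !trmxK.
rewrite mxtrace_mulC !mulmxA.
by rewrite -!mulmxA mxtrace_mulC !mulmxA.
Qed.

Lemma fi_ge0 (R : realType) m n (A : 'M[R]_(m, n)) : 0 <= fi A A.
Proof.
rewrite /fi /mxtrace; apply: sumr_ge0 => i _; rewrite mxE.
apply: sumr_ge0 => j _; rewrite mxE -expr2; exact: sqr_ge0.
Qed.

Lemma fi_sym (R : realType) m n (A B : 'M[R]_(m, n)) : fi A B = fi B A.
Proof. by rewrite /fi -mxtrace_tr trmx_mul trmxK. Qed.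

Lemma fi_addl (R : realType) m n (A B C : 'M[R]_(m, n)) : fi (A + B) C = fi A C + fi B C.
Proof. by rewrite /fi raddfD /= mulmxDl mxtraceD. Qed.

Lemma fi_addr (R : realType) m n (A B C : 'M[R]_(m, n)) : fi C (A + B) = fi C A + fi C B.
Proof. by rewrite /fi mulmxDr mxtraceD. Qed.

Lemma sy_addr (R : realType) q s (LY : 'M[R]_q) (LS : 'M[R]_s) A B C :
  sy_inner LY LS C (A + B) = sy_inner LY LS C A + sy_inner LY LS C B.
Proof. by rewrite !sy_innerE mulmxDr mulmxDl fi_addr. Qed.

Lemma sy_sym (R : realType) q s (LY : 'M[R]_q) (LS : 'M[R]_s) A B :
  sy_inner LY LS A B = sy_inner LY LS B A.
Proof. by rewrite !sy_innerE fi_sym. Qed.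

Lemma sy_pyth (R : realType) q s (LY : 'M[R]_q) (LS : 'M[R]_s) a b :
  sy_inner LY LS a b = 0 ->
  sy_inner LY LS (a + b) (a + b) = sy_inner LY LS a a + sy_inner LY LS b b.
Proof.
move=> h.
have e : forall c, sy_inner LY LS (a + b) c = sy_inner LY LS a c + sy_inner LY LS b c.
  by move=> c; rewrite sy_sym sy_addr !(sy_sym _ _ _ _ _ c).
rewrite !e !sy_addr h (sy_sym _ _ _ _ _ b a) h.
by rewrite !addr0 add0r.
Qed.

Lemma sy_ge0 (R : realType) q s (LY : 'M[R]_q) (LS : 'M[R]_s) a : 0 <= sy_inner LY LS a a.
Proof. by rewrite sy_innerE fi_ge0. Qed.

Lemma fi_orth (R : realType) m n (U : 'M[R]_m) (V : 'M[R]_n) (M : 'M[R]_(m, n)) :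
  U^T *m U = 1%:M -> V^T *m V = 1%:M ->
  fi (U *m M *m V^T) (U *m M *m V^T) = fi M M.
Proof.
move=> hU hV; rewrite /fi !trmx_mul trmxK.
rewrite !mulmxA -(mulmxA _ U^T) hU mulmx1 mxtrace_mulC !mulmxA hV mul1mx.
by [].
Qed.

Lemma sqrt_add_le (R : realType) (a b : R) : 0 <= a -> 0 <= b ->
  Num.sqrt (a + b) <= Num.sqrt a + Num.sqrt b.
Proof.
move=> ha hb.
have h : a + b <= (Num.sqrt a + Num.sqrt b) ^+ 2.
  rewrite sqrrD !sqr_sqrtr // addrAC lerDl.
  by rewrite mulrn_wge0 // mulr_ge0 ?sqrtr_ge0.
rewrite -(ger0_norm (addr_ge0 (sqrtr_ge0 a) (sqrtr_ge0 b))) -sqrtr_sqr.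
by rewrite ler_sqrt // sqr_ge0.
Qed.


Definition dg {R : realType} n (p : nat -> bool) : 'M[R]_n :=
  diag_mx (\row_(j < n) (p (nat_of_ord j))%:R).

Lemma mul_dg_r (R : realType) m n (p : nat -> bool) (M : 'M[R]_(m, n)) i j :
  (M *m dg n p) i j = if p j then M i j else 0.
Proof. by rewrite /dg mul_mx_diag !mxE; case: (p j); rewrite ?mulr1 ?mulr0. Qed.

Lemma mul_dg_l (R : realType) m n (p : nat -> bool) (M : 'M[R]_(m, n)) i j :
  (dg m p *m M) i j = if p i then M i j else 0.
Proof. by rewrite /dg mul_diag_mx !mxE; case: (p i); rewrite ?mul1r ?mul0r. Qed.

Lemma tr_dg (R : realType) n p : (dg n p)^T = dg n p :> 'M[R]_n.
Proof. exact: tr_diag_mx. Qed.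

Lemma dg_idem (R : realType) n p : dg n p *m dg n p = dg n p :> 'M[R]_n.
Proof.
apply/matrixP => i j; rewrite mul_dg_l.
case e: (p i) => //.
by rewrite /dg !mxE e; case: (i == j).
Qed.

Lemma fiE (R : realType) m n (A : 'M[R]_(m, n)) :
  fi A A = \sum_(i < m) \sum_(j < n) A i j ^+ 2.
Proof.
rewrite /fi /mxtrace exchange_big; apply: eq_bigr => j _; rewrite mxE.
by apply: eq_bigr => i _; rewrite mxE expr2.
Qed.

Lemma fi_tr (R : realType) m n (A : 'M[R]_(m, n)) : fi A A = fi A^T A^T.
Proof. by rewrite /fi trmxK mxtrace_mulC. Qed.

Lemma rect_diag_tr (R : realType) m n sv : (rect_diag m n sv)^T = rect_diag n m sv :> 'M[R]_(n, m).
Proof.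
apply/matrixP => i j; rewrite !mxE eq_sym.
by case: eqP => // ->.
Qed.

Lemma tail_entry (R : realType) m n (sv : nat -> R) k :
  (forall j, (minn m n <= j)%N -> sv j = 0) ->
  fi (rect_diag m n sv - rect_diag m n sv *m dg n (fun j => (j < k)%N))
     (rect_diag m n sv - rect_diag m n sv *m dg n (fun j => (j < k)%N))
  = tail_sq sv k n.
Proof.
move=> hsv; rewrite fiE exchange_big /tail_sq big_geq_mkord [RHS]big_mkcond /=.
apply: eq_bigr => j _.
have E : forall i, (rect_diag m n sv - rect_diag m n sv *m dg n (fun j => (j < k)%N)) i j
   = if ((nat_of_ord i == nat_of_ord j) && (k <= j)%N) then sv i else 0.
  move=> i; rewrite mxE [X in _ + X]mxE mul_dg_r !mxE.
  by case: (i == j :> nat); case: ltnP => _ /=; rewrite ?subrr ?subr0.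
rewrite (eq_bigr (fun i : 'I_m => (if ((nat_of_ord i == nat_of_ord j) && (k <= j)%N) then sv i else 0) ^+ 2)); last by move=> i _; rewrite E.
case: (ltnP j m) => hjm.
  rewrite (bigD1 (Ordinal hjm)) //= eqxx /= big1 ?addr0.
    by case: (k <= j)%N; rewrite ?expr0n.
  move=> i hi; case e: (nat_of_ord i == nat_of_ord j) => /=; last by rewrite expr0n.
  by exfalso; move: hi; case/negP; apply/eqP/val_inj; rewrite /= (eqP e).
rewrite big1 => [|i _].
  rewrite hsv ?expr0n; first by case: (k <= j)%N.
  by rewrite geq_min hjm.
have : (nat_of_ord i != nat_of_ord j) by rewrite neq_ltn (leq_trans (ltn_ord i) hjm).
by move/negPf => ->; rewrite expr0n.
Qed.

Lemma tail_right (R : realType) q s (A : 'M[R]_(q, s)) U sv V k :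
  is_svd A U sv V ->
  fi (A - A *m V *m dg s (fun j => (j < k)%N) *m V^T) (A - A *m V *m dg s (fun j => (j < k)%N) *m V^T)
  = tail_sq sv k s.
Proof.
case=> [[hU hV] _ _ h0 ->].
have -> : U *m rect_diag q s sv *m V^T *m V = U *m rect_diag q s sv.
  by rewrite -mulmxA hV mulmx1.
rewrite -!mulmxA -mulmxBr (mulmxA _ (dg _ _)) -mulmxBl mulmxA fi_orth //.
exact: tail_entry.
Qed.

Lemma tail_left (R : realType) q s (A : 'M[R]_(q, s)) U sv V k :
  is_svd A U sv V ->
  fi (A - U *m dg q (fun j => (j < k)%N) *m U^T *m A) (A - U *m dg q (fun j => (j < k)%N) *m U^T *m A)
  = tail_sq sv k q.
Proof.
case=> [[hU hV] _ _ h0 ->].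
have -> : U *m dg q (fun j => (j < k)%N) *m U^T *m (U *m rect_diag q s sv *m V^T)
   = U *m (dg q (fun j => (j < k)%N) *m rect_diag q s sv) *m V^T.
  by rewrite !mulmxA -(mulmxA _ U^T) hU mulmx1.
rewrite -mulmxBl -mulmxBr fi_orth // fi_tr raddfB /= trmx_mul tr_dg rect_diag_tr.
apply: tail_entry => j hj; apply: h0; by rewrite minnC.
Qed.


Definition rz {R : realType} {m n} k (M : 'M[R]_(m, n)) := forall i j, (k <= nat_of_ord i)%N -> M i j = 0.
Definition cz {R : realType} {m n} k (M : 'M[R]_(m, n)) := forall i j, (k <= nat_of_ord j)%N -> M i j = 0.

Lemma rz_mulr (R : realType) m n p k (M : 'M[R]_(m, n)) (N : 'M[R]_(n, p)) :
  rz k M -> rz k (M *m N).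
Proof. by move=> h i j hi; rewrite mxE big1 // => l _; rewrite h ?mul0r. Qed.

Lemma cz_mull (R : realType) m n p k (M : 'M[R]_(m, n)) (N : 'M[R]_(n, p)) :
  cz k N -> cz k (M *m N).
Proof. by move=> h i j hj; rewrite mxE big1 // => l _; rewrite h ?mulr0. Qed.

Lemma rz_add (R : realType) m n k (M N : 'M[R]_(m, n)) : rz k M -> rz k N -> rz k (M + N).
Proof. by move=> h1 h2 i j hi; rewrite mxE h1 ?h2 ?addr0. Qed.
Lemma cz_add (R : realType) m n k (M N : 'M[R]_(m, n)) : cz k M -> cz k N -> cz k (M + N).
Proof. by move=> h1 h2 i j hi; rewrite mxE h1 ?h2 ?addr0. Qed.
Lemma rz_opp (R : realType) m n k (M : 'M[R]_(m, n)) : rz k M -> rz k (- M).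
Proof. by move=> h1 i j hi; rewrite mxE h1 ?oppr0. Qed.
Lemma cz_opp (R : realType) m n k (M : 'M[R]_(m, n)) : cz k M -> cz k (- M).
Proof. by move=> h1 i j hi; rewrite mxE h1 ?oppr0. Qed.
Lemma rz_triv (R : realType) m n (M : 'M[R]_(m, n)) : rz m M.
Proof. by move=> i j hi; move: (ltn_ord i); rewrite ltnNge hi. Qed.
Lemma cz_triv (R : realType) m n (M : 'M[R]_(m, n)) : cz n M.
Proof. by move=> i j hi; move: (ltn_ord j); rewrite ltnNge hi. Qed.

Lemma rz_dg (R : realType) m n k (M : 'M[R]_(m, n)) : rz k (dg m (fun i => (i < k)%N) *m M).
Proof. by move=> i j hi; rewrite mul_dg_l ltnNge hi. Qed.

Lemma cz_D0 (R : realType) m n k (M : 'M[R]_(m, n)) : (1 <= k)%N -> cz k (M *m dg n (fun j => j == 0%N)).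
Proof.
move=> hk i j hj; rewrite mul_dg_r; case: eqP => // e.
by move: hj; rewrite e leqNgt hk.
Qed.

Definition Sh {R : realType} n : 'M[R]_n := \matrix_(k, j) ((nat_of_ord k).+1 == nat_of_ord j)%:R.

Lemma ShE (R : realType) n (k j : 'I_n) : Sh n k j = ((nat_of_ord k).+1 == nat_of_ord j)%:R :> R.
Proof. by rewrite mxE. Qed.

Lemma cz_shift (R : realType) m n k (M : 'M[R]_(m, n)) :
  cz k (M *m dg n (fun j => (j < k.-1)%N) *m Sh n).
Proof.
move=> i j hj; rewrite mxE big1 // => l _; rewrite /dg mul_mx_diag !mxE.
case: ltnP => hl; last by rewrite mulr0 mul0r.
case: eqP => e; last by rewrite mulr0.
by exfalso; move: hj; rewrite -e leqNgt; case/negP; case: k hl {e} => //.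
Qed.

Lemma span_prodP (R : realType) q s (A : 'M[R]_q) (B : 'M[R]_s) qh sh X :
  span_prod A B qh sh X <-> exists C, [/\ rz qh C, cz sh C & X = A *m C *m B^T].
Proof.
split.
  case=> C [h ->]; exists C; split => // i j hi; apply: h; by rewrite hi ?orbT.
case=> C [h1 h2 ->]; exists C; split => // i j; case/orP; [exact: h1| exact: h2].
Qed.

Lemma time_basisE (R : realType) s (LS V : 'M[R]_s) :
  time_basis LS V = LS^T *m dg s (fun j => j == 0%N) + V *m Sh s.
Proof.
apply/matrixP => i j; rewrite /time_basis mxE [in RHS]mxE mul_dg_r.
case: eqP => e.
  rewrite [(V *m _) i j]mxE big1 ?addr0 // => l _; rewrite ShE e /= mulr0 //.
rewrite add0r mxE (bigD1 (ordpred j)) //= ShE /= prednK; last by rewrite lt0n; apply/eqP.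
rewrite eqxx mulr1 big1 ?addr0 // => l hl; rewrite ShE.
case: eqP => e2; last by rewrite mulr0.
by exfalso; move: hl; case/negP; apply/eqP/val_inj; rewrite /= -e2.
Qed.

Lemma Sh_D0 (R : realType) s : Sh s *m dg s (fun j => j == 0%N) = 0 :> 'M[R]_s.
Proof. by apply/matrixP => i j; rewrite mul_dg_r !mxE; case: eqP => // ->. Qed.

Lemma dk_ShSh (R : realType) s k : (k < s)%N ->
  dg s (fun j => (j < k)%N) *m Sh s *m (Sh s)^T = dg s (fun j => (j < k)%N) :> 'M[R]_s.
Proof.
move=> hk; apply/matrixP => i j; rewrite -mulmxA mul_dg_l.
case: ltnP => hi; last by rewrite /dg !mxE ltnNge hi /= mul0rn.
have his : (i.+1 < s)%N by apply: leq_ltn_trans hk.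
rewrite mxE (bigD1 (Ordinal his)) //= !mxE eqxx /= mul1r big1 ?addr0.
    by rewrite hi eqSS eq_sym val_eqE; case: (i == j).
move=> l hl; rewrite !mxE; case: eqP => e; last by rewrite mul0r.
by exfalso; move: hl; case/negP; apply/eqP/val_inj; rewrite /= -e.
Qed.

Lemma shift_key (R : realType) q s (LS V : 'M[R]_s) k (A H : 'M[R]_(q, s)) :
  (k < s)%N ->
  (A *m dg s (fun j => j == 0%N) + H *m dg s (fun j => (j < k)%N) *m Sh s) *m (time_basis LS V)^T
  = A *m dg s (fun j => j == 0%N) *m LS + H *m dg s (fun j => (j < k)%N) *m V^T.
Proof.
move=> hk; rewrite time_basisE raddfD /= !trmx_mul trmxK tr_dg.
rewrite mulmxDl !mulmxDr.
rewrite !mulmxA -(mulmxA A) dg_idem.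
have -> : A *m dg s (fun j => j == 0%N) *m (Sh s)^T = 0.
  by rewrite -mulmxA -(tr_dg _ s (fun j => j == 0%N)) -trmx_mul Sh_D0 trmx0 mulmx0.
have -> : H *m dg s (fun j => (j < k)%N) *m Sh s *m dg s (fun j => j == 0%N) = 0.
  by rewrite -mulmxA Sh_D0 mulmx0.
rewrite !mul0mx addr0 add0r -!mulmxA (mulmxA (Sh s)) (mulmxA (dg _ _)) (mulmxA (dg _ _) (Sh s)) dk_ShSh // !mulmxA.
Qed.


Lemma span_sub (R : realType) q s (A : 'M[R]_q) (B : 'M[R]_s) qh sh X Y :
  span_prod A B qh sh X -> span_prod A B qh sh Y -> span_prod A B qh sh (X - Y).
Proof.
move=> /span_prodP [C1 [h1 h2 ->]] /span_prodP [C2 [h3 h4 ->]].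
apply/span_prodP; exists (C1 - C2); split.
- by apply: rz_add => //; apply: rz_opp.
- by apply: cz_add => //; apply: cz_opp.
by rewrite mulmxBr mulmxBl.
Qed.

Lemma proj_best (R : realType) q s (LY : 'M[R]_q) (LS : 'M[R]_s) Z X P Y :
  is_orth_proj LY LS Z X P -> Z (P - Y) ->
  sy_inner LY LS (X - P) (X - P) <= sy_inner LY LS (X - Y) (X - Y).
Proof.
case=> _ h hY.
have -> : X - Y = (X - P) + (P - Y) by rewrite addrA subrK.
by rewrite (@sy_pyth _ _ _ LY LS (X - P) (P - Y) (h _ hY)) lerDl sy_ge0.
Qed.

Lemma combine (R : realType) q s (LY : 'M[R]_q) (LS : 'M[R]_s)
  (Z1 Z : 'M[R]_(q, s) -> Prop) X X1 P Y1 Y t1 t2 :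
  (forall A B, Z1 A -> Z1 B -> Z1 (A - B)) ->
  (forall A B, Z A -> Z B -> Z (A - B)) ->
  (forall A, Z A -> Z1 A) ->
  is_orth_proj LY LS Z1 X X1 -> is_orth_proj LY LS Z X1 P ->
  Z1 Y1 -> Z Y ->
  sy_inner LY LS (X - Y1) (X - Y1) = t1 -> sy_inner LY LS (X1 - Y) (X1 - Y) = t2 ->
  sy_norm LY LS (X - P) <= Num.sqrt t1 + Num.sqrt t2.
Proof.
move=> c1 c hZ h1 h2 hY1 hY e1 e2.
have a1 : sy_inner LY LS (X - X1) (X - X1) <= t1.
  by rewrite -e1; eapply proj_best; first exact: h1; apply: c1 => //; case: h1.
have a2 : sy_inner LY LS (X1 - P) (X1 - P) <= t2.
  by rewrite -e2; eapply proj_best; first exact: h2; apply: c => //; case: h2.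
have -> : X - P = (X - X1) + (X1 - P) by rewrite addrA subrK.
rewrite /sy_norm sy_pyth; last first.
  by case: h1 => [hX1 ->] //; apply: c1 => //; apply: hZ; case: h2.
have p1 : 0 <= t1 by apply: le_trans a1; apply: sy_ge0.
have p2 : 0 <= t2 by apply: le_trans a2; apply: sy_ge0.
apply: le_trans (sqrt_add_le _ _ _ p1 p2).
by rewrite ler_sqrt ?lerD // addr_ge0.
Qed.

Lemma syT (R : realType) q s (LY : 'M[R]_q) (LS : 'M[R]_s) X Y :
  sy_inner LY LS (X - Y) (X - Y) =
  fi (LY^T *m X *m LS - LY^T *m Y *m LS) (LY^T *m X *m LS - LY^T *m Y *m LS).
Proof. by rewrite sy_innerE mulmxBr mulmxBl. Qed.

Lemma zero_firstE (R : realType) q s (X : 'M[R]_(q, s)) :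
  zero_first X = X - X *m dg s (fun j => j == 0%N).
Proof.
apply/matrixP => i j; rewrite /zero_first mxE [RHS]mxE [X in _ + X]mxE mul_dg_r.
by case: (_ == _); rewrite ?subrr ?subr0.
Qed.


Theorem proposition2 (R : realType) (q s qh sh : nat)
  (LS : 'M[R]_s) (LY : 'M[R]_q) (c0 : 'cV[R]_q) (X : 'M[R]_(q, s)) :
  LS \in unitmx ->
  (forall i j : 'I_s, (nat_of_ord j < nat_of_ord i)%N -> LS i j = 0) ->
  LY \in unitmx ->
  (1 <= qh <= q)%N -> (2 <= sh <= s)%N ->
  (* x in \mathscr S . Y : x(0) = Pi_Y x0, c0 = coefficients of Pi_Y x0 *)
  (forall (i : 'I_q) (j : 'I_s), (nat_of_ord j == 0)%N -> X i j = c0 i 0) ->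
  (* case P = P_{Y^ -> S^} *)
  (forall (Wl : 'M[R]_q) (sig : nat -> R) (Wr : 'M[R]_s)
          (X1 : 'M[R]_(q, s))
          (Ul : 'M[R]_q) (sigr : nat -> R) (Ur : 'M[R]_s)
          (P : 'M[R]_(q, s)),
     is_svd (LY^T *m X *m LS) Wl sig Wr ->
     is_orth_proj LY LS (span_prod (space_coef LY Wl) 1%:M qh s) X X1 ->
     is_svd (LY^T *m zero_first X1 *m LS) Ul sigr Ur ->
     is_orth_proj LY LS
       (span_prod (space_coef LY Wl) (time_coef LS (time_basis LS Ur)) qh sh)
       X1 P ->
     sy_norm LY LS (X - P)
       <= Num.sqrt (tail_sq sig qh q) + Num.sqrt (tail_sq sigr sh.-1 s))
  /\
  (* case P = P_{S^ -> Y^} *)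
  (forall (Ul : 'M[R]_q) (sigr : nat -> R) (Ur : 'M[R]_s)
          (X2 : 'M[R]_(q, s))
          (Wl : 'M[R]_q) (sig : nat -> R) (Wr : 'M[R]_s)
          (P : 'M[R]_(q, s)),
     is_svd (LY^T *m zero_first X *m LS) Ul sigr Ur ->
     is_orth_proj LY LS (span_prod 1%:M (time_coef LS (time_basis LS Ur)) q sh) X X2 ->
     is_svd (LY^T *m X2 *m LS) Wl sig Wr ->
     is_orth_proj LY LS
       (span_prod (space_coef LY Wl) (time_coef LS (time_basis LS Ur)) qh sh)
       X2 P ->
     sy_norm LY LS (X - P)
       <= Num.sqrt (tail_sq sigr sh.-1 s) + Num.sqrt (tail_sq sig qh q)).
Proof.
move=> uLS _ uLY /andP [hqh1 hqh2] /andP [hsh1 hsh2] _.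
have eY : LY^T *m (invmx LY)^T = 1%:M by rewrite -trmx_mul mulVmx // trmx1.
have eS : invmx LS *m LS = 1%:M by rewrite mulVmx.
have hk : (sh.-1 < s)%N by rewrite prednK ?(leq_trans _ hsh1).
have hsh0 : (1 <= sh)%N by apply: leq_trans hsh1.
have eBt : forall U : 'M[R]_s, (time_coef LS (time_basis LS U))^T *m LS = (time_basis LS U)^T.
  by move=> U; rewrite /time_coef trmx_mul trmxK -mulmxA eS mulmx1.
have eAi : forall W : 'M[R]_q, LY^T *m space_coef LY W = W.
  by move=> W; rewrite /space_coef mulmxA eY mul1mx.
have eTY : forall (W : 'M[R]_q) (U : 'M[R]_s) (C : 'M[R]_(q, s)),
   LY^T *m (space_coef LY W *m C *m (time_coef LS (time_basis LS U))^T) *m LS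
   = W *m (C *m (time_basis LS U)^T).
  by move=> W U C; rewrite -!mulmxA eBt !mulmxA eY mul1mx.
split.
- move=> Wl sig Wr X1 Ul sigr Ur P svd1 pr1 svd2 pr2.
  have [C1 [rC1 _ eX1]] : exists C, [/\ rz qh C, cz s C & X1 = space_coef LY Wl *m C *m 1%:M^T].
    by apply/span_prodP; case: pr1.
  pose D0 : 'M[R]_s := dg s (fun j => j == 0%N).
  pose Dk : 'M[R]_s := dg s (fun j => (j < sh.-1)%N).
  pose N := (C1 - C1 *m D0) *m LS.
  have eM : LY^T *m zero_first X1 *m LS = Wl *m N.
    by rewrite zero_firstE eX1 trmx1 mulmx1 /N mulmxBl mulmxBr mulmxBl !mulmxA eY !mul1mx mulmxBr !mulmxA.
  apply: (@combine _ _ _ LY LS (span_prod (space_coef LY Wl) 1%:M qh s)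
     (span_prod (space_coef LY Wl) (time_coef LS (time_basis LS Ur)) qh sh) X X1 P
     (space_coef LY Wl *m (dg q (fun j => (j < qh)%N) *m (Wl^T *m (LY^T *m X *m LS) *m invmx LS)) *m 1%:M^T)
     (space_coef LY Wl *m (C1 *m D0 + N *m Ur *m Dk *m Sh s) *m (time_coef LS (time_basis LS Ur))^T)).
  + exact: span_sub.
  + exact: span_sub.
  + move=> A /span_prodP [C [h1 h2 ->]]; apply/span_prodP.
    exists (C *m (time_coef LS (time_basis LS Ur))^T); split; [exact: rz_mulr | exact: cz_triv |].
    by rewrite trmx1 mulmx1 mulmxA.
  + by [].
  + by [].
  + apply/span_prodP; exists (dg q (fun j => (j < qh)%N) *m (Wl^T *m (LY^T *m X *m LS) *m invmx LS)).
    by split; [exact: rz_dg | exact: cz_triv |].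
  + apply/span_prodP; exists (C1 *m D0 + N *m Ur *m Dk *m Sh s); split => //.
      apply: rz_add; first exact: rz_mulr.
      apply: rz_mulr; apply: rz_mulr; apply: rz_mulr; apply: rz_mulr.
      by apply: rz_add => //; apply: rz_opp; apply: rz_mulr.
    apply: cz_add; first exact: cz_D0.
    exact: cz_shift.
  + rewrite syT trmx1 mulmx1 !mulmxA eY mul1mx -!mulmxA eS mulmx1 !mulmxA.
    by have := tail_left _ _ _ _ _ _ _ qh svd1; rewrite !mulmxA.
  + rewrite syT eTY shift_key // eX1 trmx1 mulmx1 !mulmxA eY mul1mx.
    have := tail_right _ _ _ _ _ _ _ sh.-1 svd2; rewrite eM.
    have E : Wl *m C1 *m LS - Wl *m (C1 *m D0 *m LS + N *m Ur *m Dk *m Ur^T)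
        = Wl *m N - Wl *m N *m Ur *m Dk *m Ur^T.
      rewrite mulmxDr opprD addrA; congr (_ + _); last by rewrite !mulmxA.
      by rewrite /N mulmxBl mulmxBr !mulmxA.
    by rewrite E.
- move=> Ul sigr Ur X2 Wl sig Wr P svd1 pr1 svd2 pr2.
  have [C2 [_ cC2 eX2]] : exists C, [/\ rz q C, cz sh C & X2 = 1%:M *m C *m (time_coef LS (time_basis LS Ur))^T].
    by apply/span_prodP; case: pr1.
  pose D0 : 'M[R]_s := dg s (fun j => j == 0%N).
  pose Dk : 'M[R]_s := dg s (fun j => (j < sh.-1)%N).
  pose M := LY^T *m zero_first X *m LS.
  pose H := (invmx LY)^T *m M *m Ur.
  have eTY1 : forall C : 'M[R]_(q, s),
      LY^T *m (1%:M *m C *m (time_coef LS (time_basis LS Ur))^T) *m LS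
      = LY^T *m (C *m (time_basis LS Ur)^T).
    by move=> C; rewrite mul1mx -!mulmxA eBt.
  have eX2' : LY^T *m X2 *m LS = LY^T *m C2 *m (time_basis LS Ur)^T.
    by rewrite eX2 eTY1 mulmxA.
  apply: (@combine _ _ _ LY LS (span_prod 1%:M (time_coef LS (time_basis LS Ur)) q sh)
     (span_prod (space_coef LY Wl) (time_coef LS (time_basis LS Ur)) qh sh) X X2 P
     (1%:M *m (X *m D0 + H *m Dk *m Sh s) *m (time_coef LS (time_basis LS Ur))^T)
     (space_coef LY Wl *m (dg q (fun j => (j < qh)%N) *m (Wl^T *m LY^T *m C2)) *m (time_coef LS (time_basis LS Ur))^T)).
  + exact: span_sub.
  + exact: span_sub.
  + move=> A /span_prodP [C [h1 h2 ->]]; apply/span_prodP.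
    exists (space_coef LY Wl *m C); split; [exact: rz_triv | exact: cz_mull |].
    by rewrite mul1mx.
  + by [].
  + by [].
  + apply/span_prodP; exists (X *m D0 + H *m Dk *m Sh s); split => //; first exact: rz_triv.
    apply: cz_add; first exact: cz_D0.
    exact: cz_shift.
  + apply/span_prodP; exists (dg q (fun j => (j < qh)%N) *m (Wl^T *m LY^T *m C2)).
    by split; [exact: rz_dg | do 2 apply: cz_mull |].
  + rewrite syT eTY1 shift_key //.
    have := tail_right _ _ _ _ _ _ _ sh.-1 svd1.
    have E : LY^T *m X *m LS - LY^T *m (X *m D0 *m LS + H *m Dk *m Ur^T)
        = M - M *m Ur *m Dk *m Ur^T.
      rewrite mulmxDr opprD addrA; congr (_ + _).
        by rewrite /M zero_firstE mulmxBr mulmxBl !mulmxA.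
      by rewrite /H !mulmxA eY mul1mx.
    by rewrite E.
  + rewrite syT eTY eX2'.
    by have := tail_left _ _ _ _ _ _ _ qh svd2; rewrite eX2' !mulmxA.
Qed.
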